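(* Let $G=K_n$ be the complete graph of order $n\geq 3$, let $g:A\to B$ be a function and let $s=|g(A)|$ with $1<s<n$. Then $2(n-s)-1\leq fix(F_G)\leq 2n-s-3$.
   Context: A set $S\subseteq V(H)$ is a fixing set of a graph $H$ if the only automorphism of $H$ fixing every vertex of $S$ is the identity; $fix(H)$ is the minimum cardinality of a fixing set of $H$. Functigraph: let $G_1,G_2$ be disjoint copies of a connected graph $G$, with $A=V(G_1)$, $B=V(G_2)$, and let $g:A\to B$ be a function. The functigraph $F_G$ has vertex set $A\cup B$ and edge set $E(G_1)\cup E(G_2)\cup\{ug(u):u\in A\}$. *)

(* Defs.v *)
From mathcomp Require Import all_boot all_fingroup.
Set Implicit Arguments. Unset Strict Implicit. Unset Printing Implicit Defensive.

Definition is_autb (T : finType) (e : rel T) (s : {perm T}) : bool :=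
  [forall x, forall y, e (s x) (s y) == e x y].

Definition fixing_setb (T : finType) (e : rel T) (S : {set T}) : bool :=
  [forall s : {perm T}, (is_autb e s && [forall x in S, s x == x]) ==> (s == 1%g)].

Lemma fixing_setT (T : finType) (e : rel T) :
  exists k, [exists S : {set T}, fixing_setb e S && (#|S| == k)].
Proof.
exists #|[set: T]|; apply/existsP; exists [set: T]; rewrite eqxx andbT.
apply/forallP=> s; apply/implyP=> /andP[_ /forallP H].
apply/eqP/permP=> x; rewrite perm1; apply/eqP.
by have := H x; rewrite in_setT.
Qed.

Definition fix_number (T : finType) (e : rel T) : nat := ex_minn (fixing_setT e).

(* Functigraph F_G: vertices inl u (copy G_1, set A) and inr v (copy G_2, set B);
   edges E(G_1) u E(G_2) u { u g(u) : u in A }. *)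
Definition functigraph (V : finType) (e : rel V) (g : V -> V) : rel (V + V) :=
  fun x y =>
    match x, y with
    | inl u, inl v => e u v
    | inr u, inr v => e u v
    | inl u, inr v => g u == v
    | inr v, inl u => g u == v
    end.

Definition complete_graph (n : nat) : rel 'I_n := fun i j => i != j.

(* Main.v *)
Require Import Defs.
From mathcomp Require Import all_boot all_fingroup.
From mathcomp Require Import zify.
Set Implicit Arguments. Unset Strict Implicit. Unset Printing Implicit Defensive.

Lemma card_split (T1 T2 : finType) (P : pred (T1 + T2)) :
  #|[set y | P y]| = #|[set a | P (inl a)]| + #|[set b | P (inr b)]|.
Proof.
have -> : [set y | P y] = inl @: [set a | P (inl a)] :|: inr @: [set b | P (inr b)].
  apply/setP => -[a|b]; rewrite !inE.
  - apply/idP/orP => [H|[/imsetP[a' Ha' [->]]|/imsetP[? ? //]]]; last by rewrite inE in Ha'.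
    by left; apply: imset_f; rewrite inE.
  - apply/idP/orP => [H|[/imsetP[? ? //]|/imsetP[b' Hb' [->]]]]; last by rewrite inE in Hb'.
    by right; apply: imset_f; rewrite inE.
rewrite cardsU !card_imset; try by move=> ? ? [].
suff -> : inl @: [set a | P (inl a)] :&: inr @: [set b | P (inr b)] = set0 by rewrite cards0 subn0.
apply/setP => -[a|b]; rewrite !inE; apply/negbTE/negP => /andP[/imsetP[? ? H1] /imsetP[? ? H2]] //.
Qed.

Lemma autE (T : finType) (e : rel T) (s : {perm T}) :
  is_autb e s -> forall a b, e (s a) (s b) = e a b.
Proof. by move=> /forallP H a b; move: (H a) => /forallP /(_ b) /eqP. Qed.

Lemma aut_fixed (T : finType) (e : rel T) (s : {perm T}) :
  is_autb e s -> forall x z, s z = z -> e (s x) z = e x z.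
Proof. by move=> H x z Hz; rewrite -(autE H x z) Hz. Qed.

Lemma aut_deg (T : finType) (e : rel T) (s : {perm T}) :
  is_autb e s -> forall x, #|[set y | e (s x) y]| = #|[set y | e x y]|.
Proof.
move=> H x.
have -> : [set y | e (s x) y] = s @: [set y | e x y].
  apply/setP => y; rewrite inE; apply/idP/imsetP.
  - move=> Hy; exists (s^-1 y)%g; last by rewrite permKV.
    by rewrite inE -(autE H) permKV.
  - by case=> z; rewrite inE => Hz ->; rewrite autE.
by rewrite card_imset //; apply: perm_inj.
Qed.

Lemma tperm_aut (T : finType) (e : rel T) x y :
  (forall z, z != x -> z != y -> e x z = e y z /\ e z x = e z y) ->
  e x y = e y x -> e x x = e y y -> is_autb e (tperm x y).
Proof.
move=> H Hxy Hxx; apply/forallP => a; apply/forallP => b; apply/eqP.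
case: (tpermP x y a) => [->|->|/eqP Hax /eqP Hay];
case: (tpermP x y b) => [->|->|/eqP Hbx /eqP Hby] //.
- by case: (H b Hbx Hby).
- by case: (H b Hbx Hby).
- by case: (H a Hax Hay).
- by case: (H a Hax Hay).
Qed.

Lemma card_neq n (a : 'I_n) : #|[set b | a != b]| = n.-1.
Proof.
have -> : [set b | a != b] = [set~ a] by apply/setP => b; rewrite !inE eq_sym.
by rewrite cardsC1 card_ord.
Qed.

Lemma deg_inl n (g : 'I_n -> 'I_n) a :
  #|[set y | functigraph (@complete_graph n) g (inl a) y]| = n.-1 + 1.
Proof.
rewrite (card_split (functigraph (@complete_graph n) g (inl a))) /=.
rewrite card_neq; congr (_ + _).
have -> : [set b | g a == b] = [set g a] by apply/setP => b; rewrite !inE eq_sym.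
by rewrite cards1.
Qed.

Lemma deg_inr n (g : 'I_n -> 'I_n) b :
  #|[set y | functigraph (@complete_graph n) g (inr b) y]| =
  #|[set u | g u == b]| + n.-1.
Proof.
by rewrite (card_split (functigraph (@complete_graph n) g (inr b))) /= card_neq.
Qed.

Lemma twin_in (T : finType) (e : rel T) (S : {set T}) x y :
  fixing_setb e S -> is_autb e (tperm x y) -> x != y -> (x \in S) || (y \in S).
Proof.
move=> /forallP /(_ (tperm x y)) /implyP Hf Ha Hxy; apply/contraT.
rewrite negb_or => /andP[Hx Hy].
have : tperm x y == 1%g.
  apply: Hf; rewrite Ha /=; apply/forallP => z; apply/implyP => Hz.
  rewrite tpermD //; apply/eqP => E; [move: Hx|move: Hy]; by rewrite E Hz.
move=> /eqP /permP /(_ x); rewrite tpermL perm1 => Hyx.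
by move: Hxy; rewrite Hyx eqxx.
Qed.

Lemma lower_bound n (g : 'I_n -> 'I_n) (S : {set 'I_n + 'I_n}) :
  fixing_setb (functigraph (@complete_graph n) g) S ->
  2 * (n - #|[set g u | u : 'I_n]|) - 1 <= #|S|.
Proof.
move=> Sfix.
set e := functigraph (@complete_graph n) g.
set Im := [set g u | u : 'I_n].
have twA : forall u u', u != u' -> g u = g u' -> (inl u \in S) || (inl u' \in S).
  move=> u u' Hu Hg; apply: (twin_in Sfix) => //; apply: tperm_aut.
  - move=> [t|t] Ht1 Ht2; rewrite /functigraph /complete_graph.
      have h1 : t != u := Ht1; have h2 : t != u' := Ht2.
      by rewrite (eq_sym u) (eq_sym u') h1 h2.
    by rewrite Hg.
  - by rewrite /functigraph /complete_graph eq_sym.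
  - by rewrite /functigraph /complete_graph !eqxx.
have twB : forall w w', w \notin Im -> w' \notin Im -> w != w' ->
    (inr w \in S) || (inr w' \in S).
  move=> w w' Hw Hw' Hww; apply: (twin_in Sfix) => //; apply: tperm_aut.
  - move=> [t|t] Ht1 Ht2; rewrite /functigraph /complete_graph.
      have -> : (g t == w) = false by apply/negbTE; apply: contra Hw => /eqP <-; apply: imset_f.
      have -> : (g t == w') = false by apply/negbTE; apply: contra Hw' => /eqP <-; apply: imset_f.
      by [].
    have h1 : t != w := Ht1; have h2 : t != w' := Ht2.
    by rewrite (eq_sym w) (eq_sym w') h1 h2.
  - by rewrite /functigraph /complete_graph eq_sym.
  - by rewrite /functigraph /complete_graph !eqxx.
have -> : #|S| = #|[set y | y \in S]| by apply: eq_card => y; rewrite inE.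
rewrite (card_split (fun y => y \in S)).
set SA := [set a | inl a \in S]; set SB := [set b | inr b \in S].
have hA : #|~: SA| <= #|Im|.
  rewrite -(card_in_imset (f := g)); first by apply: subset_leq_card; apply/subsetP => v /imsetP[u _ ->]; apply: imset_f.
  move=> u u'; rewrite !inE => Hu Hu' Hg; apply/eqP; apply: contraT => Hne.
  by move: (twA u u' Hne Hg); rewrite (negbTE Hu) (negbTE Hu').
have hA2 := cardsC SA; rewrite card_ord in hA2.
have hN := cardsC Im; rewrite card_ord in hN.
have hB : #|~: Im :\: SB| <= 1.
  apply/card_le1_eqP => w w'; rewrite !inE => /andP[Hw1 Hw2] /andP[Hw1' Hw2'].
  apply/eqP; apply: contraT => Hne.
  by move: (twB w' w Hw2' Hw2 Hne); rewrite (negbTE Hw1) (negbTE Hw1').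
have hB2 := cardsID SB (~: Im).
have hB3 : #|~: Im :&: SB| <= #|SB| by apply: subset_leq_card; apply: subsetIr.
lia.
Qed.

Definition inS n (g r : 'I_n -> 'I_n) (v1 v2 w : 'I_n) (x : 'I_n + 'I_n) : bool :=
  match x with
  | inl a => r (g a) != a
  | inr b => [&& b != v1, b != v2 & b != w]
  end.

Lemma rigid n (g r : 'I_n -> 'I_n) (v1 v2 w p : 'I_n) :
  g p = v1 -> r v1 != p -> v1 != v2 -> w != v1 -> w != v2 ->
  1 < #|[set u | g u == v1]| -> 0 < #|[set u | g u == v2]| ->
  #|[set u | g u == w]| = 0 ->
  fixing_setb (functigraph (@complete_graph n) g) [set x | inS g r v1 v2 w x].
Proof.
move=> gp rp H12 Hw1 Hw2 k1 k2 kw.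
have e12 : (v1 == v2) = false by apply/negbTE.
have e1w : (v1 == w) = false by rewrite eq_sym; apply/negbTE.
apply/forallP => s; apply/implyP => /andP[Ha /forallP Hf].
have fixS : forall x, inS g r v1 v2 w x -> s x = x.
  by move=> x Hx; move/implyP: (Hf x); rewrite inE => /(_ Hx) /eqP.
have inj2 : forall x y, s y = y -> s x = y -> x = y.
  by move=> x y H1 H2; apply: (perm_inj (s:=s)); rewrite H2 H1.
have pf := aut_fixed Ha.
have dg := aut_deg Ha.
have fp : s (inl p) = inl p by apply: fixS; rewrite /= gp.
have cases : forall b, ~~ inS g r v1 v2 w (inr b) -> b = v1 \/ b = v2 \/ b = w.
  move=> b; rewrite /= !negb_and !negbK => /orP[/eqP->|/orP[/eqP->|/eqP->]]; tauto.
have step2 : forall b, ~~ inS g r v1 v2 w (inr b) -> s (inr b) = inr b.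
  move=> b Hb; case E: (s (inr b)) => [u|b'].
  - exfalso; case Su: (inS g r v1 v2 w (inl u)).
      by have := inj2 _ _ (fixS _ Su) E.
    have ru : r (g u) == u by rewrite /= in Su; apply/negbFE.
    case Hb1: (b == v1).
      have D := dg (inr b); rewrite E deg_inl deg_inr (eqP Hb1) in D; lia.
    have H := pf (inr b) (inl p) fp; rewrite E /functigraph /complete_graph gp (eq_sym v1) Hb1 in H.
    suff : u != p by rewrite H.
    by apply/eqP => Eup; rewrite Eup gp in ru; rewrite ru in rp.
  - case: (b' =P b) => [-> //|Hne]; exfalso.
    case Sb: (inS g r v1 v2 w (inr b')).
      by apply: Hne; have [] := inj2 _ _ (fixS _ Sb) E.
    have H := pf (inr b) (inl p) fp; rewrite E /functigraph gp in H.
    have D := dg (inr b); rewrite E !deg_inr in D.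
    case: (cases b Hb) => [Eb|[Eb|Eb]]; case: (cases b' (negbT Sb)) => [Eb'|[Eb'|Eb']];
      rewrite Eb Eb' in H D Hne; try (by apply: Hne);
      rewrite ?eqxx ?e12 ?e1w in H; try discriminate; lia.
have step3 : forall a, s (inl a) = inl a.
  move=> a; case Sa: (inS g r v1 v2 w (inl a)); first by apply: fixS.
  have ra : r (g a) == a by rewrite /= in Sa; apply/negbFE.
  have fz : s (inr (g a)) = inr (g a).
    by case Sz: (inS g r v1 v2 w (inr (g a))); [apply: fixS | apply: step2; rewrite Sz].
  case E: (s (inl a)) => [a'|b].
  - have H := pf (inl a) _ fz; rewrite E /functigraph eqxx in H.
    case Sa': (inS g r v1 v2 w (inl a')).
      by rewrite (inj2 _ _ (fixS _ Sa') E).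
    have ra' : r (g a') == a' by rewrite /= in Sa'; apply/negbFE.
    by rewrite -(eqP ra') (eqP H) (eqP ra).
  - exfalso; case Sb: (inS g r v1 v2 w (inr b)).
      by have := inj2 _ _ (fixS _ Sb) E.
    by have := inj2 _ _ (step2 _ (negbT Sb)) E.
apply/eqP/permP => -[a|b]; rewrite perm1; first exact: step3.
by case Sb: (inS g r v1 v2 w (inr b)); [apply: fixS | apply: step2; rewrite Sb].
Qed.

Lemma upper_set n (g : 'I_n -> 'I_n) :
  1 < #|[set g u | u : 'I_n]| -> #|[set g u | u : 'I_n]| < n ->
  exists S, fixing_setb (functigraph (@complete_graph n) g) S &&
            (#|S| == (n - #|[set g u | u : 'I_n]|) + (n - 3)).
Proof.
set Im := [set g u | u : 'I_n] => H1 H2.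
have [u [u' [Huu Hg]]] : exists u u', u != u' /\ g u = g u'.
  case: (boolP [exists u, exists u', (u != u') && (g u == g u')]).
    by move=> /existsP[u /existsP[u' /andP[A /eqP B]]]; exists u, u'.
  move=> Hn; have inj : injective g.
    move=> a b E; apply/eqP; apply: contraNT Hn => Hab.
    by apply/existsP; exists a; apply/existsP; exists b; rewrite Hab E eqxx.
  by move: H2; rewrite /Im card_imset // card_ord ltnn.
pose r v := odflt v [pick x | g x == v].
have hr : forall v, v \in Im -> g (r v) = v.
  move=> v /imsetP[x _ ->]; rewrite /r; case: pickP => [y /eqP //|/(_ x)].
  by rewrite eqxx.
pose v1 := g u.
pose p := if u == r v1 then u' else u.
have gp : g p = v1 by rewrite /p; case: ifP => // _; rewrite /v1 Hg.
have rp : r v1 != p.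
  rewrite /p; case: ifP => [/eqP <- //|]; by rewrite eq_sym => ->.
have Hv1 : v1 \in Im by apply: imset_f.
have [v2 Hv2] : exists v2, v2 \in Im :\ v1.
  apply/card_gt0P; move: (cardsD1 v1 Im); rewrite Hv1; lia.
move: Hv2; rewrite !inE => /andP[H21 Hv2].
have [w Hw] : exists w, w \in ~: Im.
  apply/card_gt0P; move: (cardsC Im); rewrite card_ord; lia.
rewrite inE in Hw.
have Hw1 : w != v1 by apply: contraNneq Hw => ->.
have Hw2 : w != v2 by apply: contraNneq Hw => ->.
exists [set x | inS g r v1 v2 w x].
apply/andP; split.
  apply: (rigid gp rp _ Hw1 Hw2); first by rewrite eq_sym.
  - have -> : 2 = #|[set p; r v1]| by rewrite cards2 eq_sym rp.
    apply: subset_leq_card; apply/subsetP => x; rewrite !inE => /orP[]/eqP->.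
      by rewrite gp.
    by rewrite hr.
  - by apply/card_gt0P; exists (r v2); rewrite inE hr.
  - apply/eqP; rewrite cards_eq0; apply/eqP/setP => x; rewrite !inE.
    by apply/negbTE; apply: contra Hw => /eqP <-; apply: imset_f.
rewrite (card_split (inS g r v1 v2 w)) /=.
set R := [set a | r (g a) == a].
have -> : [set a | r (g a) != a] = ~: R by apply/setP => a; rewrite !inE.
have RE : R = r @: Im.
  apply/setP => a; rewrite inE; apply/eqP/imsetP => [<-|[v Hv ->]].
    by exists (g a) => //; apply: imset_f.
  by rewrite hr.
have cR : #|R| = #|Im|.
  rewrite RE card_in_imset // => x y Hx Hy E.
  by rewrite -(hr _ Hx) -(hr _ Hy) E.
have -> : [set b | [&& b != v1, b != v2 & b != w]] = ~: [set v1; v2; w].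
  by apply/setP => b; rewrite !inE !negb_or andbA.
have c3 : #|[set v1; v2; w]| = 3.
  rewrite -setUA cardsU1 cards2 !inE (eq_sym v2 w) Hw2 (eq_sym v1 v2) (negbTE H21) (eq_sym v1 w) (negbTE Hw1).
  by [].
have := cardsC R; have := cardsC [set v1; v2; w]; rewrite card_ord.
move=> A B.
have X : #|~: R| = n - #|Im|.
  by apply/eqP; rewrite -(eqn_add2l #|R|) B cR subnKC // ltnW.
have Y : #|~: [set v1; v2; w]| = n - 3.
  apply/eqP; rewrite -(eqn_add2l #|[set v1; v2; w]|) A c3 subnKC //.
  by have := leq_addr #|~: [set v1; v2; w]| #|[set v1; v2; w]|; rewrite A c3.
by rewrite X Y.
Qed.

Theorem theorem3p1 (n : nat) (g : 'I_n -> 'I_n) :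
  3 <= n ->
  let s := #|[set g u | u : 'I_n]| in
  1 < s -> s < n ->
  2 * (n - s) - 1 <= fix_number (functigraph (@complete_graph n) g)
  <= 2 * n - s - 3.
Proof.
move=> Hn s Hs1 Hs2.
rewrite /fix_number; case: ex_minnP => m /existsP[S /andP[HS /eqP HSm]] Hmin.
apply/andP; split.
  by rewrite -HSm; apply: lower_bound.
have [S0 HS0] := upper_set Hs1 Hs2.
have := Hmin _ (introT existsP (ex_intro _ S0 HS0)).
rewrite -/s; lia.
Qed.
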